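(* Let $k\ge0$ and let $A$ be a real symmetric positive semidefinite matrix indexed by $\mathcal{F}'_k$ such that $A_{F_1,G_1}=A_{F_2,G_2}$ whenever $F_1G_1\simeq F_2G_2$. Then every entry of $A$ lies in the interval $[0,A_{U_k,U_k}]$, where $U_k$ is the edgeless graph on $[k]$.
   Context: $\mathcal{F}'_k$ denotes the set of flat $k$-labeled graphs, i.e. graphs on node set $[k]$ with all nodes labeled $1,\dots,k$. For $F,G\in\mathcal{F}'_k$, $FG$ is the graph on $[k]$ with edge set $E(F)\cup E(G)$. For graphs $F,G$, $F\simeq G$ means they become isomorphic after deleting their isolated nodes. *)

(* Defs.v *)
From HB Require Import structures.
From mathcomp Require Import all_boot all_order all_algebra.
Set Implicit Arguments. Unset Strict Implicit. Unset Printing Implicit Defensive.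
Import Order.TTheory GRing.Theory Num.Theory.

Definition is_simple_edgeset (k : nat) (E : {set {set 'I_k}}) : bool :=
  [forall e in E, #|e| == 2].

(* F'_k : flat k-labeled graphs (all nodes labeled), i.e. simple graphs on [k]. *)
Definition flat (k : nat) := {E : {set {set 'I_k}} | is_simple_edgeset E}.

Definition edges (k : nat) (F : flat k) : {set {set 'I_k}} := val F.

(* Edge set of the product FG : union of edge sets (node set [k]). *)
Definition flat_mul_edges (k : nat) (F G : flat k) : {set {set 'I_k}} :=
  edges F :|: edges G.

Definition nonisolated (k : nat) (E : {set {set 'I_k}}) : {set 'I_k} :=
  [set v | [exists e in E, v \in e]].

(* F ~= G : isomorphic after deleting isolated nodes, i.e. there is a map
   which is a bijection from the non-isolated nodes of F onto those of G
   carrying the edge set of F exactly onto the edge set of G. *)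
Definition iso_up_to_isolated (k : nat) (E1 E2 : {set {set 'I_k}}) : Prop :=
  exists f : 'I_k -> 'I_k,
    {in nonisolated E1 &, injective f} /\
    [set (f @: (e : {set 'I_k})) | e in E1] = E2.

Lemma edgeless_simple (k : nat) : is_simple_edgeset (set0 : {set {set 'I_k}}).
Proof. by apply/forall_inP => e; rewrite in_set0. Qed.

Definition edgeless (k : nat) : flat k := exist _ set0 (edgeless_simple k).

(* Main.v *)
Require Import Defs.
From HB Require Import structures.
From mathcomp Require Import all_boot all_order all_algebra.
Import Order.TTheory GRing.Theory Num.Theory.
Local Open Scope ring_scope.

Lemma iso_refl (k : nat) (E : {set {set 'I_k}}) : iso_up_to_isolated E E.
Proof.
exists id; split; first by move=> ? ? ? ?.
rewrite (eq_imset (g := id)) ?imset_id // => e; exact: imset_id.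
Qed.

Lemma union_simple (k : nat) (F G : flat k) :
  is_simple_edgeset (edges F :|: edges G).
Proof.
apply/forall_inP => e; rewrite in_setU => /orP [] h.
- exact: (forall_inP (valP F) e h).
- exact: (forall_inP (valP G) e h).
Qed.


Lemma sum_delta (R : realFieldType) (k : nat) (c : flat k) (f : flat k -> R) :
  \sum_(G : flat k) f G * (G == c)%:R = f c.
Proof.
rewrite (bigD1 c) //= eqxx mulr1 big1 ?addr0 // => i /negbTE ->.
by rewrite mulr0.
Qed.

Theorem mainTheorem8 (R : realFieldType) (k : nat) (A : flat k -> flat k -> R) :
  (forall F G, A F G = A G F) ->
  (forall x : flat k -> R, 0 <= \sum_(F : flat k) \sum_(G : flat k) x F * A F G * x G) ->
  (forall F1 G1 F2 G2,
      iso_up_to_isolated (flat_mul_edges F1 G1) (flat_mul_edges F2 G2) ->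
      A F1 G1 = A F2 G2) ->
  forall F G, 0 <= A F G /\ A F G <= A (edgeless k) (edgeless k).
Proof.
move=> Asym Apsd Aiso F G.
set U := edgeless k.
pose H : flat k := exist (@is_simple_edgeset k) _ (@union_simple k F G).
have eHH : A F G = A H H.
  apply: Aiso; rewrite /flat_mul_edges /edges /= setUid; exact: iso_refl.
have eHU : A F G = A H U.
  apply: Aiso; rewrite /flat_mul_edges /edges /= setU0; exact: iso_refl.
have quad : forall x : flat k -> R,
  \sum_(F0 : flat k) \sum_(G0 : flat k) x F0 * A F0 G0 * x G0
  = \sum_(F0 : flat k) x F0 * \sum_(G0 : flat k) A F0 G0 * x G0.
  move=> x; apply: eq_bigr => F0 _; rewrite mulr_sumr.
  by apply: eq_bigr => G0 _; rewrite mulrA.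
have diag : forall P, 0 <= A P P.
  move=> P; have := Apsd (fun Q => (Q == P)%:R).
  rewrite quad.
  under eq_bigr => F0 _ do rewrite sum_delta.
  by rewrite (eq_bigr (fun F0 => A F0 P * (F0 == P)%:R)) ?sum_delta //
    => F0 _; rewrite mulrC.
split; first by rewrite eHH.
case: (eqVneq H U) => [eU|nHU]; first by rewrite eHH eU.
have := Apsd (fun Q => (Q == U)%:R - (Q == H)%:R).
rewrite quad.
have inner : forall F0, \sum_(G0 : flat k) A F0 G0 * ((G0 == U)%:R - (G0 == H)%:R) = A F0 U - A F0 H.
  move=> F0; rewrite (eq_bigr (fun G0 => A F0 G0 * (G0 == U)%:R - A F0 G0 * (G0 == H)%:R)); last by move=> G0 _; rewrite mulrBr.
  by rewrite big_split /= sumrN !sum_delta.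
under eq_bigr => F0 _ do rewrite inner.
rewrite (eq_bigr (fun F0 => (A F0 U - A F0 H) * (F0 == U)%:R - (A F0 U - A F0 H) * (F0 == H)%:R)); last by move=> F0 _; rewrite mulrBl !(mulrC _ (A F0 U - A F0 H)).
rewrite big_split /= sumrN !sum_delta.
rewrite (Asym U H) -eHU -eHH.
by rewrite subrr subr0 subr_ge0.
Qed.
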